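(* Let $\Gamma\subseteq\mathbb{Z}^d$ be a finite set. Then for every $x\in\Gamma$, $$\Phi_\Gamma(x)=\sum_{e\in\mathbb{Z}^d,|e|=1}\frac1{2d}\exp(e)\otimes\Phi_\Gamma(x+e),$$ and consequently for every $n\ge2$: (a) $\displaystyle\Delta\rho_n(\Phi_\Gamma(x))=-\sum_{|e|=1}\frac1{2d}\sum_{i=1}^n\frac{e^{\otimes i}}{i!}\otimes\rho_{n-i}(\Phi_\Gamma(x+e))$ for $x\in\Gamma$; (b) $\rho_n(\Phi_\Gamma(x))=0$ for $x\in\partial\Gamma$; and $\rho_0(\Phi_\Gamma(x))=1$, $\rho_1(\Phi_\Gamma(x))=0$ for every $x\in\bar\Gamma$.
   Context: Let $(S_k)_{k\ge0}$ be the simple random walk on $\mathbb{Z}^d$ started at $S_0=x$ (under $\mathbb{E}^x$), with i.i.d. increments uniformly distributed on the $2d$ unit vectors $e\in\mathbb{Z}^d$, $|e|=1$. $\partial\Gamma=\{y\in\mathbb{Z}^d\setminus\Gamma: |y-w|=1\text{ for some }w\in\Gamma\}$, $\bar\Gamma=\Gamma\cup\partial\Gamma$, and $\tau=\tau_\Gamma=\min\{k\ge0:S_k\notin\Gamma\}$. $T((\mathbb{R}^d))$ is the algebra of formal tensor series $\mathbf a=(a_0,a_1,\dots)$, $a_n\in(\mathbb{R}^d)^{\otimes n}$, with $(\mathbf a\otimes\mathbf b)_n=\sum_{k=0}^na_k\otimes b_{n-k}$ and $\rho_n(\mathbf a)=a_n$; for $v\in\mathbb{R}^d$, $\exp(v)=\sum_{i\ge0}v^{\otimes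 i}/i!$ (the signature of the straight segment with increment $v$). $\Phi_\Gamma(x)$ is the expectation (coordinatewise) of the signature of the piecewise linear path through $S_0,S_1,\dots,S_\tau$, i.e. $\Phi_\Gamma(x)=\mathbb{E}^x[\exp(S_1-S_0)\otimes\cdots\otimes\exp(S_\tau-S_{\tau-1})]$ (equal to $\mathbf 1=(1,0,0,\dots)$ if $\tau=0$). The discrete Laplacian is $\Delta f(x)=\frac1{2d}\sum_{|e|=1}f(x+e)-f(x)$. *)

(* Defs.v *)
From Stdlib Require Import Reals Lra Lia ZArith Arith List.
Import ListNotations.
Open Scope R_scope.

(* Points of Z^d: lists of integers of length d. *)
Definition point := list Z.

Definition padd (x y : point) : point :=
  map (fun p => (fst p + snd p)%Z) (combine x y).

(* A step direction (i, s): the unit vector +e_i (s = true) or -e_i (s = false). *)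
Definition dir := (nat * bool)%type.

Definition dirs (d : nat) : list dir := list_prod (seq 0 d) [true; false].

Definition unitv (d : nat) (dd : dir) : point :=
  map (fun j => if Nat.eqb j (fst dd) then (if snd dd then 1 else -1)%Z else 0%Z)
      (seq 0 d).

Definition lsum (l : list R) : R := fold_right Rplus 0 l.

(* Formal tensor series over R^d: coordinates indexed by words
   w = [i_1; ...; i_n] (i_j < d); the word w of length n is the coordinate
   e_{i_1} (x) ... (x) e_{i_n} of the level-n component a_n.
   rho_n(a) is the restriction of a to words of length n. *)
Definition tseries := list nat -> R.

Definition tone : tseries := fun w => match w with [] => 1 | _ => 0 end.

(* (a (x) b)_n = sum_{k=0}^n a_k (x) b_{n-k} *)
Definition tmul (a b : tseries) : tseries := fun w =>
  lsum (map (fun k => a (firstn k w) * b (skipn k w)) (seq 0 (S (length w)))).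

(* exp(v) = sum_i v^{(x) i} / i! *)
Definition texp (v : list R) : tseries := fun w =>
  fold_right Rmult 1 (map (fun i => nth i v 0) w) / INR (fact (length w)).

Definition incr (d : nat) (dd : dir) : list R := map IZR (unitv d dd).

(* All sequences of k steps (each has probability (2d)^{-k}). *)
Fixpoint all_steps (d k : nat) : list (list dir) :=
  match k with
  | O => [[]]
  | S k' => flat_map (fun dd => map (fun ds => dd :: ds) (all_steps d k')) (dirs d)
  end.

Definition inG (G : list point) (x : point) : bool :=
  if in_dec (list_eq_dec Z.eq_dec) x G then true else false.

(* The walk started at x following steps ds has exit time tau = length ds. *)
Fixpoint exits_at (d : nat) (G : list point) (x : point) (ds : list dir) : bool :=
  match ds with
  | [] => negb (inG G x)
  | dd :: r => inG G x && exits_at d G (padd x (unitv d dd)) r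
  end.

(* Signature of the piecewise linear path: exp(S1-S0) (x) ... (x) exp(S_k - S_{k-1}). *)
Fixpoint sig_steps (d : nat) (ds : list dir) : tseries :=
  match ds with
  | [] => tone
  | dd :: r => tmul (texp (incr d dd)) (sig_steps d r)
  end.

(* E^x[ signature * 1_{tau = k} ], coordinate w. *)
Definition Phi_term (d : nat) (G : list point) (x : point) (w : list nat) (k : nat) : R :=
  lsum (map (fun ds => if exits_at d G x ds
                       then (/ INR (2 * d)) ^ k * sig_steps d ds w else 0)
            (all_steps d k)).

Definition valid_word (d : nat) (w : list nat) : Prop := Forall (fun i => (i < d)%nat) w.

Definition is_Phi (d : nat) (G : list point) (Phi : point -> tseries) : Prop :=
  forall x w, length x = d -> valid_word d w ->
    infinite_sum (Phi_term d G x w) (Phi x w).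

Definition Lap (d : nat) (f : point -> R) (x : point) : R :=
  lsum (map (fun dd => / INR (2 * d) * f (padd x (unitv d dd))) (dirs d)) - f x.

Definition boundary (d : nat) (G : list point) (y : point) : Prop :=
  ~ In y G /\ exists z dd, In z G /\ In dd (dirs d) /\ y = padd z (unitv d dd).

Definition closure (d : nat) (G : list point) (y : point) : Prop :=
  In y G \/ boundary d G y.

(* Main.v *)
Require Import Defs.
From Stdlib Require Import Reals List.
From Stdlib Require Import Lra Lia ZArith.
Import ListNotations.
Open Scope R_scope.

Lemma lsum_app l1 l2 : lsum (l1 ++ l2) = lsum l1 + lsum l2.
Proof. induction l1; simpl; [lra|rewrite IHl1; lra]. Qed.

Lemma lsum_ext {A} (f g : A -> R) l : (forall a, In a l -> f a = g a) ->
  lsum (map f l) = lsum (map g l).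
Proof. intro H; induction l; simpl; auto. rewrite H, IHl; auto with datatypes. Qed.

Lemma lsum_zero {A} (l : list A) : lsum (map (fun _ => 0) l) = 0.
Proof. induction l; simpl; lra. Qed.

Lemma lsum_scal {A} c (f : A -> R) l : lsum (map (fun a => c * f a) l) = c * lsum (map f l).
Proof. induction l; simpl; [lra|rewrite IHl; lra]. Qed.

Lemma lsum_plus {A} (f g : A -> R) l :
  lsum (map (fun a => f a + g a) l) = lsum (map f l) + lsum (map g l).
Proof. induction l; simpl; [lra|rewrite IHl; lra]. Qed.

Lemma lsum_minus {A} (f g : A -> R) l :
  lsum (map (fun a => f a - g a) l) = lsum (map f l) - lsum (map g l).
Proof. induction l; simpl; [lra|rewrite IHl; lra]. Qed.

Lemma lsum_const {A} c (l : list A) : lsum (map (fun _ => c) l) = INR (length l) * c.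
Proof. induction l; simpl length; [simpl; lra|]. rewrite S_INR. simpl. rewrite IHl; lra. Qed.

Lemma lsum_le {A} (f g : A -> R) l : (forall a, In a l -> f a <= g a) ->
  lsum (map f l) <= lsum (map g l).
Proof. intro H; induction l; simpl; [lra|]. pose proof (H a (or_introl eq_refl)).
  assert (lsum (map f l) <= lsum (map g l)) by (apply IHl; auto with datatypes). lra. Qed.

Lemma lsum_abs {A} (f : A -> R) l : Rabs (lsum (map f l)) <= lsum (map (fun a => Rabs (f a)) l).
Proof. induction l; simpl. rewrite Rabs_R0; lra.
  eapply Rle_trans; [apply Rabs_triang|]. lra. Qed.

Lemma lsum_flat_map {A B} (f : B -> R) (g : A -> list B) l :
  lsum (map f (flat_map g l)) = lsum (map (fun a => lsum (map f (g a))) l).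
Proof. induction l; simpl; auto. rewrite map_app, lsum_app, IHl; auto. Qed.

Lemma lsum_swap {A B} (F : A -> B -> R) l1 l2 :
  lsum (map (fun a => lsum (map (fun b => F a b) l2)) l1) =
  lsum (map (fun b => lsum (map (fun a => F a b) l1)) l2).
Proof. induction l1; simpl.
  - rewrite lsum_zero; auto.
  - rewrite IHl1. rewrite <- lsum_plus. auto. Qed.

Lemma lsum_sum {A} (F : A -> nat -> R) l K :
  sum_f_R0 (fun k => lsum (map (fun a => F a k) l)) K = lsum (map (fun a => sum_f_R0 (F a) K) l).
Proof. induction K; simpl; auto. rewrite IHK, <- lsum_plus; auto. Qed.

Lemma lsum_nonneg {A} (f : A -> R) l : (forall a, In a l -> 0 <= f a) -> 0 <= lsum (map f l).
Proof. intro H. rewrite <- (lsum_zero l). apply lsum_le; auto. Qed.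

Lemma length_dirs d : length (dirs d) = (2 * d)%nat.
Proof. unfold dirs, dir. rewrite length_prod, length_seq. simpl. lia. Qed.

Lemma avg_const d c : (0 < d)%nat ->
  lsum (map (fun _ : dir => / INR (2 * d) * c) (dirs d)) = c.
Proof. intro Hd. rewrite lsum_const, length_dirs.
  assert (INR (2*d) <> 0) by (apply not_0_INR; lia). field; auto. Qed.

Lemma Phi_term_0 d G x w :
  Phi_term d G x w 0 = if inG G x then 0 else tone w.
Proof. unfold Phi_term. simpl. destruct (inG G x); simpl; lra. Qed.

Lemma Phi_term_S d G x w k :
  Phi_term d G x w (S k) =
  if inG G x then
    lsum (map (fun dd => / INR (2 * d) *
      lsum (map (fun j => texp (incr d dd) (firstn j w) *
                          Phi_term d G (padd x (unitv d dd)) (skipn j w) k)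
                (seq 0 (S (length w))))) (dirs d))
  else 0.
Proof.
  unfold Phi_term at 1. simpl all_steps. rewrite lsum_flat_map.
  destruct (inG G x) eqn:Hx.
  - apply lsum_ext. intros dd _. rewrite map_map. unfold Phi_term.
    set (de := / INR (2 * d)).
    transitivity (lsum (map (fun ds => de * lsum (map (fun j => texp (incr d dd) (firstn j w) *
       (if exits_at d G (padd x (unitv d dd)) ds then de ^ k * sig_steps d ds (skipn j w) else 0))
       (seq 0 (S (length w))))) (all_steps d k))).
    + apply lsum_ext. intros ds _. simpl exits_at. rewrite Hx. simpl andb.
      destruct (exits_at d G (padd x (unitv d dd)) ds).
      * simpl sig_steps. unfold tmul. rewrite <- !lsum_scal. apply lsum_ext. intros j _. simpl pow. generalize (de ^ k); intro; ring.
      * transitivity (de * 0); [ring|]. f_equal.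
        symmetry; rewrite (lsum_ext _ (fun _ => 0)); [apply lsum_zero | intros; ring].
    + rewrite lsum_scal. f_equal.
      rewrite (lsum_swap (fun ds j => texp (incr d dd) (firstn j w) *
       (if exits_at d G (padd x (unitv d dd)) ds then de ^ k * sig_steps d ds (skipn j w) else 0))).
      apply lsum_ext. intros j _. rewrite lsum_scal. reflexivity.
  - rewrite (lsum_ext _ (fun _ => 0)); [apply lsum_zero|]. intros dd _. rewrite map_map.
    simpl exits_at. rewrite Hx. simpl andb.
    rewrite (lsum_ext _ (fun _ => 0)); [apply lsum_zero| intros; reflexivity].
Qed.

Lemma texp_nil v : texp v [] = 1.
Proof. unfold texp. simpl. field. Qed.

Lemma texp_one v i : texp v [i] = nth i v 0.
Proof. unfold texp. simpl. field. Qed.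

Lemma Phi_term_S_nil d G x k :
  Phi_term d G x [] (S k) = if inG G x then
    lsum (map (fun dd => / INR (2 * d) * Phi_term d G (padd x (unitv d dd)) [] k) (dirs d)) else 0.
Proof. rewrite Phi_term_S. destruct (inG G x); auto. apply lsum_ext. intros dd _.
  simpl. rewrite texp_nil. ring. Qed.

Lemma Phi_term_S_one d G x i k :
  Phi_term d G x [i] (S k) = if inG G x then
    lsum (map (fun dd => / INR (2 * d) * (Phi_term d G (padd x (unitv d dd)) [i] k
        + nth i (incr d dd) 0 * Phi_term d G (padd x (unitv d dd)) [] k)) (dirs d)) else 0.
Proof. rewrite Phi_term_S. destruct (inG G x); auto. apply lsum_ext. intros dd _.
  simpl. rewrite texp_nil, texp_one. ring. Qed.

Fixpoint Surv d G x k : R :=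
  match k with
  | O => 1
  | S k' => if inG G x then lsum (map (fun dd => / INR (2 * d) * Surv d G (padd x (unitv d dd)) k') (dirs d)) else 0
  end.

Lemma avg_le d (f : dir -> R) M : (0 < d)%nat -> (forall dd, In dd (dirs d) -> f dd <= M) ->
  lsum (map (fun dd => / INR (2 * d) * f dd) (dirs d)) <= M.
Proof. intros Hd H. rewrite <- (avg_const d M Hd). apply lsum_le. intros a Ha.
  apply Rmult_le_compat_l; auto. left; apply Rinv_0_lt_compat, lt_0_INR; lia. Qed.

Lemma avg_ge d (f : dir -> R) M : (0 < d)%nat -> (forall dd, In dd (dirs d) -> M <= f dd) ->
  M <= lsum (map (fun dd => / INR (2 * d) * f dd) (dirs d)).
Proof. intros Hd H. rewrite <- (avg_const d M Hd). apply lsum_le. intros a Ha.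
  apply Rmult_le_compat_l; auto. left; apply Rinv_0_lt_compat, lt_0_INR; lia. Qed.

Lemma Surv_bounds d G x k : (0 < d)%nat -> 0 <= Surv d G x k <= 1.
Proof. intro Hd. revert x; induction k; intro x; simpl. lra.
  destruct (inG G x); [|lra]. split.
  - apply avg_ge; auto. intros; apply IHk.
  - apply avg_le; auto. intros; apply IHk. Qed.

Lemma Surv_mult d G k M : (0 < d)%nat -> (forall y, Surv d G y k <= M) ->
  forall j x, Surv d G x (j + k) <= M * Surv d G x j.
Proof. intros Hd HM. induction j; intro x; simpl. rewrite Rmult_1_r; auto.
  destruct (inG G x); [|lra]. rewrite <- lsum_scal. apply lsum_le. intros dd _.
  specialize (IHj (padd x (unitv d dd))).
  assert (0 <= / INR (2*d)) by (left; apply Rinv_0_lt_compat, lt_0_INR; lia).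
  rewrite <- Rmult_assoc, (Rmult_comm M), Rmult_assoc. apply Rmult_le_compat_l; auto. Qed.

Lemma length_unitv d dd : length (unitv d dd) = d.
Proof. unfold unitv. rewrite length_map, length_seq. auto. Qed.

Lemma length_padd d x dd : length x = d -> length (padd x (unitv d dd)) = d.
Proof. intro H. unfold padd. rewrite length_map, length_combine, length_unitv, H. lia. Qed.

Lemma padd_first d x : (0 < d)%nat -> length x = d ->
  nth 0 (padd x (unitv d (0%nat, true))) 0%Z = (nth 0 x 0%Z + 1)%Z.
Proof. intros Hd Hx. destruct d; [lia|]. destruct x; simpl in Hx; [lia|].
  unfold padd, unitv. simpl. reflexivity. Qed.

Lemma In_dir0 d : (0 < d)%nat -> In (0%nat, true) (dirs d).
Proof. intro. unfold dirs, dir. apply in_prod; [apply in_seq; lia| simpl; auto]. Qed.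

Lemma inG_spec G x : inG G x = true <-> In x G.
Proof. unfold inG. destruct (in_dec (list_eq_dec Z.eq_dec) x G); split; auto; discriminate. Qed.

Lemma inG_false G x : ~ In x G -> inG G x = false.
Proof. unfold inG. destruct (in_dec (list_eq_dec Z.eq_dec) x G); tauto. Qed.

Lemma lsum_distinguished {A} (f : A -> R) l a0 eps : In a0 l ->
  (forall a, In a l -> f a <= 1) -> f a0 <= 1 - eps ->
  lsum (map f l) <= INR (length l) - eps.
Proof. induction l; intros Hin H H0; [destruct Hin|]. simpl length. rewrite S_INR. simpl.
  destruct Hin as [<-|Hin].
  - assert (lsum (map f l) <= lsum (map (fun _ => 1) l)) by (apply lsum_le; auto with datatypes).
    rewrite lsum_const in H1. lra.
  - assert (f a <= 1) by auto with datatypes.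
    assert (lsum (map f l) <= INR (length l) - eps) by (apply IHl; auto with datatypes). lra.
Qed.

Lemma bounds_G (G : list point) : exists Bmin Bmax, forall y, In y G ->
  (Bmin <= nth 0 y 0%Z <= Bmax)%Z.
Proof. induction G. exists 0%Z, 0%Z; intros y [].
  destruct IHG as [m [M H]]. exists (Z.min m (nth 0 a 0%Z)), (Z.max M (nth 0 a 0%Z)).
  intros y [<-|Hy]; [lia|]. specialize (H y Hy); lia. Qed.

Lemma delta_pos d : (0 < d)%nat -> 0 < / INR (2 * d).
Proof. intro; apply Rinv_0_lt_compat, lt_0_INR; lia. Qed.

Lemma delta_le d : (0 < d)%nat -> / INR (2 * d) <= 1.
Proof. intro. rewrite <- Rinv_1. apply Rinv_le_contravar; [lra|]. 
  change 1 with (INR 1). apply le_INR; lia. Qed.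

Lemma pow_le1 x n : 0 <= x <= 1 -> x ^ n <= 1.
Proof. intro H. rewrite <- (pow1 n). apply pow_incr; lra. Qed.

Lemma exit_lemma d G Bmax : (0 < d)%nat -> (forall y, In y G -> (nth 0 y 0%Z <= Bmax)%Z) ->
  forall j x, length x = d -> (Bmax < nth 0 x 0%Z + Z.of_nat j)%Z ->
  Surv d G x (S j) <= 1 - (/ INR (2 * d)) ^ (S j).
Proof. intros Hd HB. pose proof (delta_pos d Hd). pose proof (delta_le d Hd).
  assert (Hp : forall n, 0 < (/ INR (2*d))^n <= 1).
  { intro n; split; [apply pow_lt; auto| apply pow_le1; lra]. }
  induction j; intros x Hx Hlt.
  - cbn [Surv pow]. rewrite inG_false. lra. intro Hin. specialize (HB x Hin). lia.
  - change (Surv d G x (S (S j))) with (if inG G x then lsum (map (fun dd => / INR (2 * d) * Surv d G (padd x (unitv d dd)) (S j)) (dirs d)) else 0).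
    destruct (inG G x). 2:{ specialize (Hp (S (S j))). lra. }
    rewrite lsum_scal.
    assert (lsum (map (fun dd => Surv d G (padd x (unitv d dd)) (S j)) (dirs d)) <=
            INR (length (dirs d)) - (/ INR (2 * d)) ^ (S j)).
    { apply (lsum_distinguished _ _ (0%nat, true)). apply In_dir0; auto.
      intros; apply Surv_bounds; auto.
      apply IHj. apply length_padd; auto. rewrite padd_first; auto. lia. }
    rewrite length_dirs in H1.
    assert (HI : / INR (2 * d) * INR (2 * d) = 1) by (field; apply not_0_INR; lia).
    change ((/ INR (2 * d)) ^ S (S j)) with (/ INR (2 * d) * (/ INR (2 * d)) ^ S j).
    generalize dependent ((/ INR (2 * d)) ^ S j). intros. nra.
Qed.

Lemma bernoulli t n : 0 <= t <= 1 -> 1 - INR n * t <= (1 - t) ^ n.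
Proof. intro H. induction n. simpl; lra. rewrite S_INR. simpl.
  assert (0 <= (1 - t) ^ n) by (apply pow_le; lra).
  destruct (Rle_dec 0 (1 - INR n * t)).
  - assert ((1 - t) * (1 - INR n * t) <= (1-t)*(1-t)^n) by (apply Rmult_le_compat_l; lra).
    assert (0 <= INR n) by apply pos_INR. assert (0 <= INR n * (t * t)) by (apply Rmult_le_pos; nra). nra.
  - assert (0 <= INR n) by apply pos_INR. nra. Qed.

Lemma surv_L d G : (0 < d)%nat -> Forall (fun y => length y = d) G ->
  exists L, (0 < L)%nat /\ forall y, Surv d G y L <= 1 - (/ INR (2 * d)) ^ L.
Proof. intros Hd HG. destruct (bounds_G G) as [m [M HB]].
  exists (S (S (Z.to_nat (M - m)))). split; [lia|]. intro y.
  destruct (inG G y) eqn:Hy.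
  - apply (exit_lemma d G M); auto. intros; apply HB; auto.
    apply inG_spec in Hy. rewrite Forall_forall in HG. auto.
    apply inG_spec in Hy. specialize (HB y Hy). lia.
  - cbn [Surv]. rewrite Hy. 
    pose proof (delta_pos d Hd). pose proof (delta_le d Hd).
    assert ((/ INR (2 * d)) ^ S (S (Z.to_nat (M - m))) <= 1) by (apply pow_le1; lra). lra.
Qed.

Lemma surv_tail d G : (0 < d)%nat -> Forall (fun y => length y = d) G ->
  exists q c, 0 < q < 1 /\ 0 < c /\ forall k x, Surv d G x k <= c * q ^ k.
Proof. intros Hd HG. destruct (surv_L d G Hd HG) as [L [HL HS]].
  pose proof (delta_pos d Hd). pose proof (delta_le d Hd).
  set (de := / INR (2 * d)) in *.
  assert (HdL : 0 < de ^ L <= 1) by (split; [apply pow_lt; auto| apply pow_le1; lra]).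
  assert (HLr : 1 <= INR L) by (change 1 with (INR 1); apply le_INR; lia).
  set (q := 1 - de ^ L / INR L).
  assert (Hq : 0 < q < 1).
  { unfold q. split.
    - assert (de ^ L / INR L <= de ^ L).
      { unfold Rdiv. rewrite <- (Rmult_1_r (de ^ L)) at 2. apply Rmult_le_compat_l; [lra|].
        rewrite <- Rinv_1. apply Rinv_le_contravar; lra. }
      assert (de ^ L < 1).
      { destruct L; [lia|]. simpl. assert (de < 1).
        { unfold de. rewrite <- Rinv_1. apply Rinv_lt_contravar. rewrite Rmult_1_l; apply lt_0_INR; lia.
          change 1 with (INR 1). apply lt_INR; lia. }
        assert (de ^ L <= 1) by (apply pow_le1; lra). nra. }
      lra.
    - assert (0 < de ^ L / INR L) by (apply Rdiv_lt_0_compat; lra). lra. }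
  assert (HqL : 1 - de ^ L <= q ^ L).
  { unfold q. replace (1 - de ^ L) with (1 - INR L * (de ^ L / INR L)) by (field; lra).
    apply bernoulli. split. left; apply Rdiv_lt_0_compat; lra.
    apply Rmult_le_reg_r with (INR L); [lra|]. unfold Rdiv. rewrite Rmult_assoc, Rinv_l; lra. }
  assert (HqLp : 0 < q ^ L) by (apply pow_lt; lra).
  exists q, (/ q ^ L). split; auto. split. apply Rinv_0_lt_compat; auto.
  assert (Hmain : forall n k, (k <= n)%nat -> forall x, Surv d G x k <= / q ^ L * q ^ k).
  { induction n; intros k Hk x.
    - assert (k = 0%nat) by lia. subst. simpl. rewrite Rmult_1_r.
      assert (Surv d G x 0 <= 1) by (apply Surv_bounds; auto).
      assert (q ^ L <= 1) by (apply pow_le1; lra).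
      assert (1 <= / q ^ L). { rewrite <- Rinv_1. apply Rinv_le_contravar; lra. } lra.
    - destruct (le_lt_dec k L) as [HkL|HkL].
      + assert (Surv d G x k <= 1) by (apply Surv_bounds; auto).
        assert (q ^ L = q ^ k * q ^ (L - k)) by (rewrite <- pow_add; f_equal; lia).
        assert (q ^ (L - k) <= 1) by (apply pow_le1; lra).
        assert (0 < q ^ k) by (apply pow_lt; lra).
        assert (1 <= / q ^ L * q ^ k).
        { assert (0 < q ^ (L - k)) by (apply pow_lt; lra).
          replace (/ q ^ L * q ^ k) with (/ q ^ (L - k)) by (rewrite H2; field; lra).
          rewrite <- Rinv_1. apply Rinv_le_contravar; [apply pow_lt; lra|lra]. }
        lra.
      + replace k with ((k - L) + L)%nat by lia.
        eapply Rle_trans. apply Surv_mult; auto.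
        eapply Rle_trans. apply Rmult_le_compat_r. apply Surv_bounds; auto. apply HqL.
        eapply Rle_trans.
        apply Rmult_le_compat_l. lra. apply IHn. lia.
        rewrite pow_add. right. field. lra. }
  intros k x. apply (Hmain k); lia.
Qed.

Lemma nth_IZR_bound (l : list Z) i : Forall (fun z => (-1 <= z <= 1)%Z) l ->
  Rabs (nth i (map IZR l) 0) <= 1.
Proof. revert i; induction l; intros i H; destruct i; simpl.
  1,2: rewrite Rabs_R0; lra.
  - inversion H; subst. apply Rabs_le. split.
    + assert (IZR (-1) <= IZR a) by (apply IZR_le; lia). lra.
    + assert (IZR a <= IZR 1) by (apply IZR_le; lia). lra.
  - inversion H; subst. auto. Qed.

Lemma incr_entry d dd i : Rabs (nth i (incr d dd) 0) <= 1.
Proof. unfold incr. apply nth_IZR_bound. unfold unitv. rewrite Forall_forall.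
  intros z Hz. apply in_map_iff in Hz. destruct Hz as [j [<- _]].
  destruct (Nat.eqb j (fst dd)); [destruct (snd dd)|]; lia. Qed.

Lemma fact_ge1 n : 1 <= INR (fact n).
Proof. change 1 with (INR 1). apply le_INR. pose proof (lt_O_fact n). lia. Qed.

Lemma texp_abs d dd u : Rabs (texp (incr d dd) u) <= 1.
Proof. unfold texp. unfold Rdiv. rewrite Rabs_mult.
  assert (Rabs (fold_right Rmult 1 (map (fun i => nth i (incr d dd) 0) u)) <= 1).
  { induction u; simpl. rewrite Rabs_R1; lra. rewrite Rabs_mult.
    pose proof (incr_entry d dd a). pose proof (Rabs_pos (nth a (incr d dd) 0)).
    pose proof (Rabs_pos (fold_right Rmult 1 (map (fun i : nat => nth i (incr d dd) 0) u))). nra. }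
  pose proof (fact_ge1 (length u)).
  rewrite Rabs_inv, (Rabs_right (INR (fact (length u)))) by lra.
  assert (/ INR (fact (length u)) <= 1) by (rewrite <- Rinv_1; apply Rinv_le_contravar; lra).
  assert (0 < / INR (fact (length u))) by (apply Rinv_0_lt_compat; lra).
  pose proof (Rabs_pos (fold_right Rmult 1 (map (fun i : nat => nth i (incr d dd) 0) u))). nra. Qed.

Lemma geo_sum a m : 0 <= a -> lsum (map (fun j => a ^ (m - j)) (seq 0 (S m))) <= (a + 1) ^ m.
Proof. intro Ha. induction m.
  - simpl. lra.
  - rewrite <- cons_seq. rewrite <- seq_shift. rewrite map_cons, map_map. cbn [lsum fold_right]. change (lsum (map (fun x : nat => a ^ (S m - S x)) (seq 0 (S m)))) with (lsum (map (fun x : nat => a ^ (m - x)) (seq 0 (S m)))).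
    replace (S m - 0)%nat with (S m) by lia.
    rewrite (lsum_ext _ (fun j => a ^ (m - j))) by (intros; reflexivity).
    assert (a ^ m <= (a+1)^m) by (apply pow_incr; lra).
    assert (0 <= (a+1)^m) by (apply pow_le; lra).
    simpl pow. nra. Qed.

Lemma Phi_term_bound d G : (0 < d)%nat -> forall k x w,
  Rabs (Phi_term d G x w k) <= Surv d G x k * (INR k + 1) ^ length w.
Proof. intro Hd. pose proof (delta_pos d Hd). induction k; intros x w.
  - rewrite Phi_term_0. simpl Surv. simpl INR. rewrite Rplus_0_l, pow1, Rmult_1_l.
    destruct (inG G x). rewrite Rabs_R0; lra. destruct w; simpl. rewrite Rabs_R1; lra. rewrite Rabs_R0; lra.
  - rewrite Phi_term_S. cbn [Surv]. destruct (inG G x); [|rewrite Rabs_R0; lra].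
    eapply Rle_trans. apply lsum_abs.
    rewrite Rmult_comm, <- lsum_scal. apply lsum_le. intros dd _.
    rewrite Rabs_mult, Rabs_right by lra.
    set (y := padd x (unitv d dd)).
    assert (Rabs (lsum (map (fun j => texp (incr d dd) (firstn j w) * Phi_term d G y (skipn j w) k)
      (seq 0 (S (length w))))) <= Surv d G y k * (INR k + 1 + 1) ^ length w).
    { eapply Rle_trans. apply lsum_abs.
      eapply Rle_trans. apply (lsum_le _ (fun j => Surv d G y k * (INR k + 1) ^ (length w - j))).
      { intros j _. rewrite Rabs_mult. rewrite <- length_skipn.
        pose proof (texp_abs d dd (firstn j w)). pose proof (IHk y (skipn j w)).
        pose proof (Rabs_pos (Phi_term d G y (skipn j w) k)).
        pose proof (Rabs_pos (texp (incr d dd) (firstn j w))). nra. }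
      rewrite lsum_scal. apply Rmult_le_compat_l. apply Surv_bounds; auto.
      apply geo_sum. pose proof (pos_INR k); lra. }
    rewrite S_INR. nra.
Qed.

Lemma sum_scal (f : nat -> R) c K : sum_f_R0 (fun k => c * f k) K = c * sum_f_R0 f K.
Proof. induction K; simpl; [|rewrite IHK]; ring. Qed.

Lemma pow_diff a b m : 0 <= b <= a -> a ^ S m - b ^ S m <= INR (S m) * a ^ m * (a - b).
Proof. intro H. induction m.
  - simpl. lra.
  - rewrite S_INR. 
    assert (E : a ^ S (S m) - b ^ S (S m) = a * (a ^ S m - b ^ S m) + b ^ S m * (a - b)) by (simpl; ring).
    rewrite E.
    assert (b ^ S m <= a ^ S m) by (apply pow_incr; lra).
    assert (0 <= a ^ m) by (apply pow_le; lra).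
    assert (a * (a ^ S m - b ^ S m) <= a * (INR (S m) * a ^ m * (a - b))) by (apply Rmult_le_compat_l; lra).
    assert (a ^ S m = a * a ^ m) by reflexivity.
    assert (0 <= a - b) by lra.
    assert (b ^ S m * (a - b) <= a ^ S m * (a - b)) by (apply Rmult_le_compat_r; lra).
    replace ((INR (S m) + 1) * a ^ S m * (a - b)) with
      (a * (INR (S m) * a ^ m * (a - b)) + a ^ S m * (a - b)) by (rewrite H3; ring).
    lra.
Qed.

Definition tq (q : R) (n : nat) (k : nat) := q ^ k * (INR k + 1) ^ n.

Lemma tq_nonneg q n k : 0 <= q -> 0 <= tq q n k.
Proof. intro. unfold tq. apply Rmult_le_pos; apply pow_le; auto. pose proof (pos_INR k); lra. Qed.

Lemma S0_id q K : (1 - q) * sum_f_R0 (tq q 0) K + q ^ S K = 1.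
Proof. induction K; unfold tq in *; simpl in *. ring.
  transitivity ((1 - q) * sum_f_R0 (fun k => q ^ k * 1) K + q * q ^ K); [|lra].
  ring. Qed.

Lemma Sn_id q m K : 0 <= q -> (1 - q) * sum_f_R0 (tq q (S m)) K + q ^ S K * (INR K + 1) ^ S m
   <= INR (S m) * sum_f_R0 (tq q m) K.
Proof. intro Hq. induction K.
  - unfold tq. cbn [sum_f_R0 pow]. rewrite S_INR. change (INR 0) with 0. rewrite Rplus_0_l, pow1. assert (0 <= INR m) by apply pos_INR. nra.
  - cbn [sum_f_R0].
    assert (Hd : (INR (S K) + 1) ^ S m - (INR K + 1) ^ S m <= INR (S m) * (INR (S K) + 1) ^ m * 1).
    { pose proof (pow_diff (INR (S K) + 1) (INR K + 1) m) as Hp.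
      replace (INR (S K) + 1 - (INR K + 1)) with 1 in Hp by (rewrite S_INR; ring).
      apply Hp. rewrite S_INR. pose proof (pos_INR K). lra. }
    assert (0 <= q ^ S K) by (apply pow_le; auto).
    unfold tq in *.
    replace ((1 - q) * (sum_f_R0 (fun k => q ^ k * (INR k + 1) ^ S m) K + q ^ S K * (INR (S K) + 1) ^ S m) +
      q ^ S (S K) * (INR (S K) + 1) ^ S m) with
      ((1 - q) * sum_f_R0 (fun k => q ^ k * (INR k + 1) ^ S m) K + q ^ S K * (INR K + 1) ^ S m
       + q ^ S K * ((INR (S K) + 1) ^ S m - (INR K + 1) ^ S m)) by (simpl; ring).
    assert (q ^ S K * ((INR (S K) + 1) ^ S m - (INR K + 1) ^ S m) <= q ^ S K * (INR (S m) * (INR (S K) + 1) ^ m * 1))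
      by (apply Rmult_le_compat_l; auto).
    rewrite Rmult_plus_distr_l. lra.
Qed.

Lemma Sn_bound q n : 0 <= q < 1 -> exists B, forall K, sum_f_R0 (tq q n) K <= B.
Proof. intro Hq. induction n.
  - exists (/ (1 - q)). intro K. pose proof (S0_id q K).
    assert (0 <= q ^ S K) by (apply pow_le; lra).
    apply Rmult_le_reg_l with (1 - q); [lra|]. rewrite Rinv_r; lra.
  - destruct IHn as [B HB]. exists (INR (S n) * B / (1 - q)). intro K.
    pose proof (Sn_id q n K (proj1 Hq)).
    assert (0 <= q ^ S K * (INR K + 1) ^ S n).
    { apply Rmult_le_pos; apply pow_le; [lra|]. pose proof (pos_INR K); lra. }
    assert (INR (S n) * sum_f_R0 (tq q n) K <= INR (S n) * B) by (apply Rmult_le_compat_l; [apply pos_INR|auto]).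
    apply Rmult_le_reg_l with (1 - q); [lra|]. unfold Rdiv.
    replace ((1 - q) * (INR (S n) * B * / (1 - q))) with (INR (S n) * B) by (field; lra). lra.
Qed.

Lemma tq_summable q n c : 0 <= q < 1 -> 0 <= c ->
  {l | Un_cv (sum_f_R0 (fun k => c * tq q n k)) l}.
Proof. intros Hq Hc. apply growing_cv.
  - intro K. simpl. assert (0 <= c * tq q n (S K)) by (apply Rmult_le_pos; auto; apply tq_nonneg; lra). lra.
  - destruct (Sn_bound q n Hq) as [B HB]. exists (c * B). intros x [i ->].
    rewrite sum_scal. apply Rmult_le_compat_l; auto.
Qed.

Lemma series_comp (a b : nat -> R) : (forall k, Rabs (a k) <= b k) ->
  {l | Un_cv (sum_f_R0 b) l} -> {l | Un_cv (sum_f_R0 a) l}.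
Proof. intros H [lb Hb].
  destruct (Rseries_CV_comp (fun k => a k + b k) (fun k => b k + b k)) as [l1 H1].
  { intro k. specialize (H k). pose proof (Rle_abs (a k)). pose proof (Rle_abs (- a k)). rewrite Rabs_Ropp in H1. lra. }
  { exists (lb + lb). apply Un_cv_ext with (fun N => sum_f_R0 b N + sum_f_R0 b N).
    intro; rewrite plus_sum; auto. apply CV_plus; auto. }
  exists (l1 - lb). apply Un_cv_ext with (fun N => sum_f_R0 (fun k => a k + b k) N - sum_f_R0 b N).
  intro N. rewrite <- minus_sum. apply sum_eq. intros; ring.
  apply CV_minus; auto.
Qed.

Lemma cv_terms_0 (a : nat -> R) l : Un_cv (sum_f_R0 a) l -> Un_cv a 0.
Proof. intros H eps Heps. destruct (H (eps/2)) as [N HN]; [lra|].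
  exists (S N). intros n Hn. destruct n; [lia|].
  pose proof (HN (S n) ltac:(lia)). pose proof (HN n ltac:(lia)).
  unfold Rdist in *. simpl in H0. rewrite Rminus_0_r.
  replace (a (S n)) with ((sum_f_R0 a n + a (S n) - l) - (sum_f_R0 a n - l)) by ring.
  eapply Rle_lt_trans. apply Rabs_triang. rewrite Rabs_Ropp. lra.
Qed.

Lemma sum_shift f K : sum_f_R0 f (S K) = f 0%nat + sum_f_R0 (fun j => f (S j)) K.
Proof. induction K. simpl; ring. cbn [sum_f_R0] in *. rewrite IHK. ring. Qed.

Lemma sum_zero K : sum_f_R0 (fun _ => 0) K = 0.
Proof. induction K; simpl; [|rewrite IHK]; ring. Qed.

Lemma Surv_S d G x k : Surv d G x (S k) = if inG G x then
  lsum (map (fun dd => / INR (2 * d) * Surv d G (padd x (unitv d dd)) k) (dirs d)) else 0.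
Proof. reflexivity. Qed.

Lemma level0 d G : (0 < d)%nat -> forall K y,
  sum_f_R0 (Phi_term d G y []) K = 1 - Surv d G y (S K).
Proof. intro Hd. induction K; intro y.
  - simpl sum_f_R0. rewrite Phi_term_0. cbn [Surv]. destruct (inG G y).
    rewrite avg_const; auto; ring. simpl; ring.
  - rewrite sum_shift. rewrite Phi_term_0.
    rewrite (sum_eq _ (fun j => if inG G y then
       lsum (map (fun dd => / INR (2 * d) * Phi_term d G (padd y (unitv d dd)) [] j) (dirs d)) else 0))
      by (intros; apply Phi_term_S_nil).
    rewrite Surv_S. destruct (inG G y).
    + rewrite lsum_sum.
      rewrite (lsum_ext _ (fun dd => / INR (2 * d) * 1 - / INR (2 * d) * Surv d G (padd y (unitv d dd)) (S K))).
      2:{ intros dd _. rewrite sum_scal, IHK. ring. }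
      rewrite lsum_minus, avg_const; auto. ring.
    + rewrite sum_zero. simpl. ring.
Qed.

Lemma incr_neg d j i : nth i (incr d (j, false)) 0 = - nth i (incr d (j, true)) 0.
Proof. unfold incr, unitv. simpl. generalize (seq 0 d). intro l. revert i.
  induction l; intro i; destruct i; simpl; try lra.
  - destruct (Nat.eqb a j); lra.
  - apply IHl. Qed.

Lemma sum_ei d i : lsum (map (fun dd => nth i (incr d dd) 0) (dirs d)) = 0.
Proof. unfold dirs, dir. generalize (seq 0 d). intro l. induction l; simpl. reflexivity.
  rewrite incr_neg. rewrite IHl. ring. Qed.

Fixpoint Yf d G i x k : R :=
  match k with
  | O => 0
  | S k' => if inG G x then lsum (map (fun dd => / INR (2 * d) *
       (nth i (incr d dd) 0 * Surv d G (padd x (unitv d dd)) k' + Yf d G i (padd x (unitv d dd)) k')) (dirs d)) else 0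
  end.

Lemma Yf_S d G i x k : Yf d G i x (S k) = if inG G x then lsum (map (fun dd => / INR (2 * d) *
       (nth i (incr d dd) 0 * Surv d G (padd x (unitv d dd)) k + Yf d G i (padd x (unitv d dd)) k)) (dirs d)) else 0.
Proof. reflexivity. Qed.

Lemma level1 d G i : (0 < d)%nat -> forall K y,
  sum_f_R0 (Phi_term d G y [i]) K + Yf d G i y (S K) = 0.
Proof. intro Hd. induction K; intro y.
  - simpl sum_f_R0. rewrite Phi_term_0, Yf_S. destruct (inG G y).
    + rewrite (lsum_ext _ (fun dd => / INR (2 * d) * nth i (incr d dd) 0)).
      rewrite lsum_scal, sum_ei. ring. intros; simpl; ring.
    + simpl; ring.
  - rewrite sum_shift. rewrite Phi_term_0.
    rewrite (sum_eq _ (fun j => if inG G y then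
       lsum (map (fun dd => / INR (2 * d) * (Phi_term d G (padd y (unitv d dd)) [i] j
        + nth i (incr d dd) 0 * Phi_term d G (padd y (unitv d dd)) [] j)) (dirs d)) else 0))
      by (intros; apply Phi_term_S_one).
    rewrite Yf_S. destruct (inG G y).
    + rewrite lsum_sum. rewrite Rplus_0_l, <- lsum_plus.
      rewrite (lsum_ext _ (fun dd => / INR (2 * d) * nth i (incr d dd) 0)).
      rewrite lsum_scal, sum_ei. ring.
      intros dd _. rewrite sum_scal.
      rewrite plus_sum. rewrite (sum_scal (Phi_term d G (padd y (unitv d dd)) [])).
      rewrite level0; auto.
      pose proof (IHK (padd y (unitv d dd))). 
      transitivity (/ INR (2 * d) * (nth i (incr d dd) 0 + (sum_f_R0 (Phi_term d G (padd y (unitv d dd)) [i]) K +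
          Yf d G i (padd y (unitv d dd)) (S K)))); [ring|]. rewrite H. ring.
    + rewrite sum_zero. simpl. ring.
Qed.

Lemma Yf_bound d G i : (0 < d)%nat -> forall k x, Rabs (Yf d G i x k) <= INR k * Surv d G x k.
Proof. intro Hd. pose proof (delta_pos d Hd). induction k; intro x.
  - simpl. rewrite Rabs_R0. lra.
  - rewrite Yf_S, Surv_S. destruct (inG G x); [|rewrite Rabs_R0; lra].
    eapply Rle_trans. apply lsum_abs. rewrite <- lsum_scal. apply lsum_le. intros dd _.
    rewrite Rabs_mult, Rabs_right by lra.
    set (y := padd x (unitv d dd)).
    pose proof (incr_entry d dd i). pose proof (IHk y).
    pose proof (Surv_bounds d G y k Hd).
    assert (Rabs (nth i (incr d dd) 0 * Surv d G y k + Yf d G i y k) <= INR (S k) * Surv d G y k).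
    { eapply Rle_trans. apply Rabs_triang. rewrite Rabs_mult, (Rabs_right (Surv d G y k)) by lra.
      rewrite S_INR. pose proof (Rabs_pos (nth i (incr d dd) 0)). nra. }
    pose proof (Rabs_pos (nth i (incr d dd) 0 * Surv d G y k + Yf d G i y k)). nra.
Qed.

Lemma isum_ext f g l : (forall k, f k = g k) -> infinite_sum f l -> infinite_sum g l.
Proof. intros E H. apply (Un_cv_ext (sum_f_R0 f)); auto. intro n; apply sum_eq; auto. Qed.

Lemma cv_const c : Un_cv (fun _ => c) c.
Proof. intros eps He. exists 0%nat. intros. unfold Rdist. rewrite Rminus_diag, Rabs_R0. lra. Qed.

Lemma isum_scal f l c : infinite_sum f l -> infinite_sum (fun k => c * f k) (c * l).
Proof. intro H. apply (Un_cv_ext (fun n => c * sum_f_R0 f n)).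
  intro; rewrite sum_scal; auto. apply CV_mult; auto. apply cv_const. Qed.

Lemma isum_plus f g l m : infinite_sum f l -> infinite_sum g m -> infinite_sum (fun k => f k + g k) (l + m).
Proof. intros. apply (Un_cv_ext (fun n => sum_f_R0 f n + sum_f_R0 g n)).
  intro; rewrite plus_sum; auto. apply CV_plus; auto. Qed.

Lemma isum_list {A} (F : A -> nat -> R) L l : (forall a, In a l -> infinite_sum (F a) (L a)) ->
  infinite_sum (fun k => lsum (map (fun a => F a k) l)) (lsum (map L l)).
Proof. induction l; intro H; simpl.
  - apply (Un_cv_ext (fun _ => 0)). intro; rewrite sum_zero; auto. apply cv_const.
  - apply isum_plus; auto with datatypes. Qed.

Lemma isum_shift f l m : infinite_sum f l -> f 0%nat = 0 -> infinite_sum (fun k => f (S k)) m -> l = m.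
Proof. intros H1 H0 H2. apply (uniqueness_sum f); auto.
  intros eps He. destruct (H2 eps He) as [N HN]. exists (S N). intros n Hn.
  destruct n; [lia|]. rewrite sum_shift, H0, Rplus_0_l. apply HN. lia. Qed.

Lemma squeeze0 u v : (forall n, Rabs (u n) <= v n) -> Un_cv v 0 -> Un_cv u 0.
Proof. intros H Hv eps He. destruct (Hv eps He) as [N HN]. exists N. intros n Hn.
  specialize (HN n Hn). unfold Rdist in *. rewrite Rminus_0_r in *.
  pose proof (H n). pose proof (Rle_abs (v n)). lra. Qed.

Lemma Forall_skipn {A} (P : A -> Prop) l j : Forall P l -> Forall P (skipn j l).
Proof. revert l; induction j; intros l H; simpl; auto. destruct l; auto. inversion H; auto. Qed.

Theorem mainTheorem17 (d : nat) (G : list point) :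
  (0 < d)%nat ->
  Forall (fun y => length y = d) G ->
  (exists Phi, is_Phi d G Phi) /\
  forall Phi, is_Phi d G Phi ->
    (forall x, In x G -> forall w, valid_word d w ->
       Phi x w =
       lsum (map (fun dd => / INR (2 * d) *
                    tmul (texp (incr d dd)) (Phi (padd x (unitv d dd))) w)
                 (dirs d))) /\
    (forall n, (2 <= n)%nat ->
       (forall x, In x G -> forall w, valid_word d w -> length w = n ->
          Lap d (fun y => Phi y w) x =
          - lsum (map (fun dd => / INR (2 * d) *
                 lsum (map (fun i => texp (incr d dd) (firstn i w) *
                                     Phi (padd x (unitv d dd)) (skipn i w))
                           (seq 1 n)))
                 (dirs d))) /\
       (forall x, boundary d G x -> forall w, valid_word d w -> length w = n ->
          Phi x w = 0)) /\
    (forall x, closure d G x ->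
       Phi x [] = 1 /\ forall i, (i < d)%nat -> Phi x [i] = 0).
Proof.
  intros Hd HG.
  destruct (surv_tail d G Hd HG) as [q [c [Hq [Hc Hsurv]]]].
  assert (Hbd : forall x w k, Rabs (Phi_term d G x w k) <= c * tq q (length w) k).
  { intros x w k. eapply Rle_trans. apply Phi_term_bound; auto. unfold tq.
    rewrite <- Rmult_assoc. apply Rmult_le_compat_r. apply pow_le. pose proof (pos_INR k); lra.
    apply Hsurv. }
  assert (Hconv : forall x w, {l | infinite_sum (Phi_term d G x w) l}).
  { intros x w. apply (series_comp _ (fun k => c * tq q (length w) k)); auto.
    apply tq_summable; lra. }
  assert (Hterm : forall n, Un_cv (fun k => c * tq q n k) 0).
  { intro n. destruct (tq_summable q n c) as [l Hl]; try lra. eapply cv_terms_0; eauto. }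
  assert (HqK : forall K, q ^ S K <= q ^ K).
  { intro K. simpl. assert (0 <= q ^ K) by (apply pow_le; lra). nra. }
  split.
  { exists (fun x w => proj1_sig (Hconv x w)). intros x w _ _. exact (proj2_sig (Hconv x w)). }
  intros Phi HPhi.
  assert (Hlen : forall z dd, In z G -> length (padd z (unitv d dd)) = d).
  { intros z dd Hz. apply length_padd. rewrite Forall_forall in HG; auto. }
  assert (L0 : forall x, length x = d -> Phi x [] = 1).
  { intros x Hx. apply (uniqueness_sum (Phi_term d G x [])). apply HPhi; [exact Hx| constructor].
    apply (Un_cv_ext (fun K => 1 - Surv d G x (S K))).
    intro K; rewrite level0; auto.
    cut (Un_cv (fun K => 1 - Surv d G x (S K)) (1 - 0)); [rewrite Rminus_0_r; auto|]. apply CV_minus. apply cv_const.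
    apply (squeeze0 _ (fun K => c * tq q 0 K)); auto.
    intro K. pose proof (Surv_bounds d G x (S K) Hd). rewrite Rabs_right by lra.
    eapply Rle_trans. apply Hsurv. unfold tq. simpl pow at 2. rewrite Rmult_1_r.
    apply Rmult_le_compat_l; [lra|apply HqK]. }
  assert (L1 : forall x i, length x = d -> (i < d)%nat -> Phi x [i] = 0).
  { intros x i Hx Hi. apply (uniqueness_sum (Phi_term d G x [i])). apply HPhi; [exact Hx| constructor; [exact Hi| constructor]].
    apply (Un_cv_ext (fun K => - Yf d G i x (S K))).
    intro K. pose proof (level1 d G i Hd K x). lra.
    apply (squeeze0 _ (fun K => c * tq q 1 K)); auto.
    intro K. rewrite Rabs_Ropp. eapply Rle_trans. apply Yf_bound; auto.
    pose proof (Surv_bounds d G x (S K) Hd). pose proof (Hsurv (S K) x).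
    unfold tq. rewrite S_INR. simpl pow at 2. rewrite Rmult_1_r.
    assert (0 <= INR K + 1) by (pose proof (pos_INR K); lra).
    assert (Surv d G x (S K) <= c * q ^ K) by (pose proof (HqK K); nra).
    nra. }
  assert (Rec : forall x, In x G -> forall w, valid_word d w ->
       Phi x w = lsum (map (fun dd => / INR (2 * d) *
                    tmul (texp (incr d dd)) (Phi (padd x (unitv d dd))) w) (dirs d))).
  { intros x Hx w Hw. assert (Hin : inG G x = true) by (apply inG_spec; auto).
    apply (isum_shift (Phi_term d G x w)). apply HPhi; auto. rewrite Forall_forall in HG; auto.
    rewrite Phi_term_0, Hin; auto.
    apply (isum_ext (fun k => lsum (map (fun dd => / INR (2 * d) *
      lsum (map (fun j => texp (incr d dd) (firstn j w) *
                          Phi_term d G (padd x (unitv d dd)) (skipn j w) k)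
                (seq 0 (S (length w))))) (dirs d)))).
    { intro k. rewrite Phi_term_S, Hin. auto. }
    apply isum_list. intros dd _. apply isum_scal. unfold tmul.
    apply isum_list. intros j _. apply isum_scal. apply HPhi. apply Hlen; auto.
    apply Forall_skipn; auto. }
  split; [exact Rec|]. split.
  - intros n Hn. split.
    + intros x Hx w Hw Hwn. unfold Lap. rewrite (Rec x Hx w Hw).
      unfold tmul. rewrite Hwn. 
      rewrite <- lsum_minus.
      match goal with |- _ = - ?X => replace (- X) with (-1 * X) by ring end.
      rewrite <- (lsum_scal (-1)).
      apply lsum_ext. intros dd _. rewrite <- cons_seq. cbn [map lsum fold_right].
      rewrite firstn_0, skipn_0, texp_nil. fold (lsum (map (fun i => texp (incr d dd) (firstn i w) *
                                     Phi (padd x (unitv d dd)) (skipn i w)) (seq 1 n))). ring.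
    + intros x [Hnx [z [dd [Hz [Hdd ->]]]]] w Hw Hwn.
      apply (uniqueness_sum (Phi_term d G (padd z (unitv d dd)) w)). apply HPhi; auto.
      apply (Un_cv_ext (fun _ => 0)). 2: apply cv_const.
      intro K. rewrite <- (sum_zero K). apply sum_eq. intros k _.
      destruct k.
      * rewrite Phi_term_0, inG_false by auto. destruct w; simpl in Hwn; [lia|reflexivity].
      * rewrite Phi_term_S, inG_false by auto. reflexivity.
  - intros x Hcl. assert (Hx : length x = d).
    { destruct Hcl as [Hx|[_ [z [dd [Hz [_ ->]]]]]]. rewrite Forall_forall in HG; auto. apply Hlen; auto. }
    split; [apply L0; auto|]. intros i Hi. apply L1; auto.
Qed.
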